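(* Let $\theta\ge1$, let $G = (\mu,\mathcal{V},\mathcal{W},\mathcal{E})$ be a non-trivial weighted bipartite graph and let $G'$ be a subgraph of $G$ such that $\mu^{(\theta)}(G')>\mu^{(\theta)}(G)$. Then \[ \delta(G')>\delta(G) \quad\text{and}\quad \frac{\mu^{(\theta')}(G')}{\mu^{(\theta')}(G)} \ge \frac{\mu^{(\theta)}(G')}{\mu^{(\theta)}(G)} >1 \quad\text{for all}\ \theta'\ge\theta. \]
   Context: A weighted bipartite graph is $G=(\mu,\mathcal{V},\mathcal{W},\mathcal{E})$ with $\mu:\mathbb{R}_{>0}\to\mathbb{R}_{>0}$, $\mathcal{V},\mathcal{W}$ finite sets of positive reals, $\mathcal{E}\subseteq\mathcal{V}\times\mathcal{W}$; it is non-trivial if $\mathcal{E}\neq\emptyset$. $\mu(\mathcal{T})=\sum_{t\in\mathcal{T}}\mu(t)$ and $\mu(\mathcal{E})=\sum_{(v,w)\in\mathcal{E}}\mu(v)\mu(w)$. Edge density $\delta(G)=\mu(\mathcal{E})/(\mu(\mathcal{V})\mu(\mathcal{W}))$ if $G$ is non-trivial, else $0$. For $\theta\ge1$, $\mu^{(\theta)}(G)=\delta(G)^\theta\mu(\mathcal{V})\mu(\mathcal{W})$. A subgraph of $G$ is $(\mu,\mathcal{V}',\mathcal{W}',\mathcal{E}')$ with $\mathcal{V}'\subseteq\mathcal{V}$, $\mathcal{W}'\subseteq\mathcal{W}$, $\mathcal{E}'\subseteq\mathcal{E}\cap(\mathcal{V}'\times\mathcal{W}')$. *)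

(* Defs.v *)
From HB Require Import structures.
From mathcomp Require Import all_boot all_order all_algebra.
From mathcomp Require Import finmap.
From mathcomp Require Import all_classical all_reals.
From mathcomp Require Import exp.
Set Implicit Arguments. Unset Strict Implicit. Unset Printing Implicit Defensive.
Import Order.TTheory GRing.Theory Num.Theory.
Local Open Scope ring_scope.
Local Open Scope fset_scope.

Record wbgraph (R : realType) := WBGraph {
  wmu : R -> R;
  wV : {fset R};
  wW : {fset R};
  wE : {fset (R * R)} }.

Definition wbg_wf (R : realType) (G : wbgraph R) : Prop :=
  (forall x : R, 0 < x -> 0 < wmu G x) /\
  (forall v, v \in wV G -> 0 < v) /\
  (forall w, w \in wW G -> 0 < w) /\
  (forall e, e \in wE G -> e.1 \in wV G /\ e.2 \in wW G).

Definition nontrivial (R : realType) (G : wbgraph R) : Prop := wE G != fset0.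

Definition mu_set (R : realType) (mu : R -> R) (T : {fset R}) : R :=
  \sum_(t <- T) mu t.

Definition mu_edges (R : realType) (mu : R -> R) (E : {fset (R * R)}) : R :=
  \sum_(e <- E) (mu e.1 * mu e.2).

Definition density (R : realType) (G : wbgraph R) : R :=
  if wE G != fset0 then
    mu_edges (wmu G) (wE G) / (mu_set (wmu G) (wV G) * mu_set (wmu G) (wW G))
  else 0.

Definition mu_theta (R : realType) (theta : R) (G : wbgraph R) : R :=
  powR (density G) theta * mu_set (wmu G) (wV G) * mu_set (wmu G) (wW G).

Definition subgraph (R : realType) (G' G : wbgraph R) : Prop :=
  wmu G' = wmu G /\
  wV G' `<=` wV G /\
  wW G' `<=` wW G /\
  (forall e, e \in wE G' -> [/\ e \in wE G, e.1 \in wV G' & e.2 \in wW G']).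

(* Main.v *)
Require Import Defs.
From HB Require Import structures.
From mathcomp Require Import all_boot all_order all_algebra.
From mathcomp Require Import finmap.
From mathcomp Require Import all_classical all_reals.
From mathcomp Require Import exp.
From mathcomp Require Import ring lra.
Import Order.TTheory GRing.Theory Num.Theory.
Local Open Scope ring_scope.

Section Helpers.
Variable R : realType.
Local Open Scope fset_scope.

Lemma fsum_ge0 (I : choiceType) (T : {fset I}) (F : I -> R) :
  (forall y, y \in T -> 0 <= F y) -> 0 <= \sum_(t <- T) F t.
Proof. by move=> H; rewrite big_seq; apply: sumr_ge0 => y; apply: H. Qed.

Lemma fsum_gt0 (I : choiceType) (T : {fset I}) (F : I -> R) x :
  x \in T -> (forall y, y \in T -> 0 < F y) -> 0 < \sum_(t <- T) F t.
Proof.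
move=> xT H; rewrite (big_fsetD1 x) //=.
have h1 := H x xT.
have h2 : 0 <= \sum_(t <- T `\ x) F t.
  apply: fsum_ge0 => y; rewrite !inE => /andP[_ yT]; exact/ltW/H.
lra.
Qed.

Lemma fsum_sub (I : choiceType) (A B : {fset I}) (F : I -> R) :
  (A `<=` B)%fset -> (forall y, y \in B -> 0 <= F y) ->
  \sum_(t <- A) F t <= \sum_(t <- B) F t.
Proof.
move=> AB H; rewrite [X in _ <= X](big_fsetID _ (mem A)) /=.
have -> : \sum_(t <- A) F t = \sum_(i <- [fset x in B | x \in A]%fset) F i.
  apply: eq_fbigl => i; rewrite !inE /=.
  by case iA: (i \in A); rewrite ?andbT ?andbF // (fsubsetP AB).
have : 0 <= \sum_(i <- [fset x in B | x \notin A]%fset) F i.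
  apply: fsum_ge0 => y; rewrite !inE /= => /andP[yB _]; exact: H.
lra.
Qed.
End Helpers.

Theorem lemma5p6 (R : realType) (theta : R) (G G' : wbgraph R) :
  1 <= theta ->
  wbg_wf G -> nontrivial G -> subgraph G' G ->
  mu_theta theta G' > mu_theta theta G ->
  density G' > density G /\
  (forall theta' : R, theta <= theta' ->
     mu_theta theta' G' / mu_theta theta' G >= mu_theta theta G' / mu_theta theta G /\
     mu_theta theta G' / mu_theta theta G > 1).
Proof.
move=> h1 [mupos [Vpos [Wpos Ewf]]] ntG [mueq [sV [sW sE]]] hgt.
set mu := wmu G.
have muV v : v \in wV G -> 0 < mu v by move=> /Vpos; apply: mupos.
have muW v : v \in wW G -> 0 < mu v by move=> /Wpos; apply: mupos.
have [e eE] : exists e, e \in wE G by apply/fset0Pn.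
have [eV eW] := Ewf e eE.
have hmuE : 0 < mu_edges mu (wE G).
  rewrite /mu_edges; apply: (@fsum_gt0 _ _ _ (fun e => mu e.1 * mu e.2) _ eE) => y /Ewf [y1 y2]; apply: mulr_gt0; [exact: muV|exact: muW].
have hA1 : 0 < mu_set mu (wV G) by rewrite /mu_set; apply: (@fsum_gt0 _ _ _ mu _ eV).
have hA2 : 0 < mu_set mu (wW G) by rewrite /mu_set; apply: (@fsum_gt0 _ _ _ mu _ eW).
set A1 := mu_set mu (wV G) in hA1 *.
set A2 := mu_set mu (wW G) in hA2 *.
set mE := mu_edges mu (wE G) in hmuE *.
have dG : density G = mE / (A1 * A2) by rewrite /density ntG.
have hd : 0 < density G by rewrite dG divr_gt0 // mulr_gt0.
set d := density G in dG hd *.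
have mtG (t : R) : mu_theta t G = d `^ t * A1 * A2 by [].
have mtGpos (t : R) : 0 < mu_theta t G.
  by rewrite mtG !mulr_gt0 // powR_gt0.
have th0 : theta != 0 by rewrite gt_eqF // (lt_le_trans ltr01 h1).
have ntG' : wE G' != fset0.
  apply/negP => /eqP E0.
  move: hgt; rewrite /mu_theta /density E0 eqxx /= powR0 // !mul0r.
  by move=> /(lt_trans (mtGpos theta)); rewrite ltxx.
have [e' eE'] : exists e, e \in wE G' by apply/fset0Pn.
have [eE1 eV' eW'] := sE e' eE'.
have muV' v : v \in wV G' -> 0 < mu v by move=> /(fsubsetP sV); apply: muV.
have muW' v : v \in wW G' -> 0 < mu v by move=> /(fsubsetP sW); apply: muW.
have ha1 : 0 < mu_set mu (wV G') by rewrite /mu_set; apply: (@fsum_gt0 _ _ _ mu _ eV').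
have ha2 : 0 < mu_set mu (wW G') by rewrite /mu_set; apply: (@fsum_gt0 _ _ _ mu _ eW').
have hmE' : 0 < mu_edges mu (wE G').
  rewrite /mu_edges; apply: (@fsum_gt0 _ _ _ (fun e => mu e.1 * mu e.2) _ eE') => y /sE [_ y1 y2]; apply: mulr_gt0; [exact: muV'|exact: muW'].
have hle : mu_edges mu (wE G') <= mE.
  rewrite /mu_edges; apply: (@fsum_sub _ _ _ _ (fun e => mu e.1 * mu e.2)).
    by apply/fsubsetP => y /sE [].
  by move=> y /Ewf [y1 y2]; apply/ltW/mulr_gt0; [exact: muV|exact: muW].
set a1 := mu_set mu (wV G') in ha1 *.
set a2 := mu_set mu (wW G') in ha2 *.
set mE' := mu_edges mu (wE G') in hmE' hle *.
have dG' : density G' = mE' / (a1 * a2) by rewrite /density ntG' mueq.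
have hd' : 0 < density G' by rewrite dG' divr_gt0 // mulr_gt0.
set d' := density G' in dG' hd' *.
set q := d' / d.
have hq : 0 < q by rewrite divr_gt0.
have d'q : d' = q * d by rewrite /q mulrVK // unitfE gt_eqF.
have mtG' (t : R) : mu_theta t G' = q `^ t * d `^ t * a1 * a2.
  by rewrite /mu_theta -/d' mueq -/a1 -/a2 d'q powRM // ?ltW.
have key : q * (a1 * a2) <= A1 * A2.
  have e1 : mE' = q * d * (a1 * a2).
    by rewrite -d'q dG' mulrVK // unitfE gt_eqF // mulr_gt0.
  have e2 : mE = d * (A1 * A2).
    by rewrite dG mulrVK // unitfE gt_eqF // mulr_gt0.
  have : q * d * (a1 * a2) <= d * (A1 * A2) by rewrite -e1 -e2.
  by rewrite -mulrA mulrCA ler_pM2l.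
have hq1 : 1 < q.
  rewrite ltNge; apply/negP => q1.
  have qq : q `^ theta <= q by apply: ge1r_powR => //; rewrite hq.
  have hdt : 0 < d `^ theta by apply: powR_gt0.
  move: hgt; rewrite mtG' mtG.
  have : q `^ theta * (a1 * a2) <= A1 * A2.
    apply: le_trans key; apply: ler_wpM2r => //; exact/ltW/mulr_gt0.
  move: (powR_ge0 q theta) => ? ?.
  have : q `^ theta * d `^ theta * a1 * a2 <= d `^ theta * A1 * A2.
    have -> : q `^ theta * d `^ theta * a1 * a2 = d `^ theta * (q `^ theta * (a1 * a2)) by ring.
    by rewrite -mulrA ler_pM2l.
  by move=> h /(le_lt_trans h); rewrite ltxx.
split.
  rewrite d'q -{1}[d]mul1r ltr_pM2r //.
move=> t tt.
have rat (s : R) : mu_theta s G' / mu_theta s G = q `^ s * ((a1 * a2) / (A1 * A2)).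
  rewrite mtG' mtG; have : 0 < d `^ s by apply: powR_gt0.
  move=> hs; field.
  by rewrite !gt_eqF.
split; last by rewrite ltr_pdivlMr // mul1r.
rewrite !rat; apply: ler_wpM2r.
  by apply/ltW/divr_gt0; apply: mulr_gt0.
by apply: ler_powR => //; exact: ltW.
Qed.
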